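(* Let $n,x$ be integers with $1<x<n$, so that $G=C_{2n}(x,1,n)$ is a $5$-regular circulant graph. If $n\equiv 1 \pmod 3$, $x\equiv 2\pmod 3$ and $2<x<\tfrac{n}{2}$, then $G$ is word-representable.
   Context: Two distinct letters $x,y$ alternate in a word $w$ if, after deleting all other letters from $w$, the resulting word is of the form $xyxy\cdots$ or $yxyx\cdots$ (of even or odd length). A graph $G=(V,E)$ is word-representable if there is a word $w$ over the alphabet $V$, containing every letter of $V$ at least once, such that for all distinct $x,y\in V$, $xy\in E$ if and only if $x$ and $y$ alternate in $w$. For an integer $m$ and a set $R$ of positive integers each at most $m/2$, the circulant graph $C_m(R)$ has vertex set $\{0,1,\dots,m-1\}$, with $i$ and $j$ adjacent iff $\min(|i-j|,\,m-|i-j|)\in R$. $C_{2n}(x,1,n)$ denotes the circulant graph on $2n$ vertices with jump set $\{1,x,n\}$; it is $5$-regular exactly when $1<x<n$. *)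

(* Defs.v *)
From mathcomp Require Import all_boot all_order.
Set Implicit Arguments. Unset Strict Implicit. Unset Printing Implicit Defensive.

Definition restrict (T : eqType) (x y : T) (w : seq T) : seq T :=
  [seq z <- w | (z == x) || (z == y)].

Definition alt_word (T : eqType) (x y : T) (u : seq T) : Prop :=
  (u = [seq (if odd i then y else x) | i <- iota 0 (size u)]) \/
  (u = [seq (if odd i then x else y) | i <- iota 0 (size u)]).

Definition alternate (T : eqType) (x y : T) (w : seq T) : Prop :=
  alt_word x y (restrict x y w).

(* A graph on a finite vertex type V with adjacency relation E (assumed
   symmetric and irreflexive) is word-representable. *)
Definition word_representable (V : finType) (E : V -> V -> bool) : Prop :=
  exists w : seq V,
    (forall v : V, v \in w) /\
    (forall a b : V, a != b -> (E a b <-> alternate a b w)).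

Definition cdist (m i j : nat) : nat :=
  let d := if i <= j then j - i else i - j in minn d (m - d).

Definition circulant (m : nat) (R : pred nat) : 'I_m -> 'I_m -> bool :=
  fun i j => (i != j) && R (cdist m i j).

Arguments circulant m R : clear implicits.

Definition C2n (n x : nat) : 'I_(2 * n)%N -> 'I_(2 * n)%N -> bool :=
  circulant (2 * n)%N (fun d => (d == 1) || (d == x) || (d == n)).
Arguments C2n n x : clear implicits.

(* Main.v *)
Require Import Defs.
From mathcomp Require Import all_boot all_order.
Set Implicit Arguments. Unset Strict Implicit. Unset Printing Implicit Defensive.

Lemma restrict_filter (T : eqType) (a b : T) (P : pred T) s :
  restrict a b [seq v <- s | P v] = [seq v <- restrict a b s | P v].
Proof. by rewrite /restrict -!filter_predI; apply: eq_filter => z /=; rewrite andbC. Qed.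

Lemma restrict_cat (T : eqType) (a b : T) s1 s2 :
  restrict a b (s1 ++ s2) = restrict a b s1 ++ restrict a b s2.
Proof. by rewrite /restrict filter_cat. Qed.

Lemma restrict_sym (T : eqType) (a b : T) s : restrict a b s = restrict b a s.
Proof. by rewrite /restrict; apply: eq_filter => z; rewrite orbC. Qed.

Definition lay (V : finType) (col : V -> nat) (k : nat) : seq V :=
  [seq v <- enum V | col v == k].
Definition LL (V : finType) (col : V -> nat) : seq V :=
  lay col 0 ++ lay col 1 ++ lay col 2.

Lemma restrict_lay (V : finType) (col : V -> nat) a b k :
  col a != col b ->
  restrict a b (lay col k) =
  (if col a == k then [:: a] else [::]) ++ (if col b == k then [:: b] else [::]).
Proof.
move=> hab; rewrite /lay restrict_filter /restrict -filter_predI.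
have nab : a != b by apply: contraNneq hab => ->.
have nba : b != a by rewrite eq_sym.
have ha : a \in enum V by rewrite mem_enum.
have hb : b \in enum V by rewrite mem_enum.
case: (eqVneq (col a) k) => [ea|na].
  have nb : col b != k by rewrite -ea eq_sym.
  rewrite (negbTE nb) cats0 -(filter_pred1_uniq (enum_uniq V) ha).
  apply: eq_filter => z /=.
  by case: (eqVneq z a) => [->|za]; last case: (eqVneq z b) => [->|zb]; rewrite /= ?eqxx ?orbT ?orbF ?(negbTE za) /=;
    rewrite ?andbT ?andbF ?(negbTE nab) ?(negbTE nba);
    rewrite ?ea ?eqxx ?andbF ?(negbTE nb) ?(negbTE za).
case: (eqVneq (col b) k) => [eb|nb] /=.
  rewrite -(filter_pred1_uniq (enum_uniq V) hb).
  apply: eq_filter => z /=.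
  by case: (eqVneq z a) => [->|za]; last case: (eqVneq z b) => [->|zb]; rewrite /= ?eqxx ?orbT ?orbF ?(negbTE za) /=;
    rewrite ?andbT ?andbF ?(negbTE nab) ?(negbTE nba);
    rewrite ?eb ?eqxx ?andbF ?(negbTE na) ?(negbTE zb).
rewrite (eq_filter (a2 := pred0)) ?filter_pred0 // => z /=.
by case: (eqVneq z a) => [->|za]; last case: (eqVneq z b) => [->|zb]; rewrite /= ?eqxx ?orbT ?orbF ?(negbTE za) /=;
    rewrite ?andbT ?andbF ?(negbTE nab) ?(negbTE nba);
    rewrite ?andbF ?(negbTE na) ?(negbTE nb).
Qed.

From mathcomp Require Import zify.

Lemma restrict_LL (V : finType) (col : V -> nat) a b :
  col a < col b -> col b < 3 -> restrict a b (LL col) = [:: a; b].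
Proof.
move=> h1 h2; have hab : col a != col b by rewrite neq_ltn h1.
rewrite /LL !restrict_cat !restrict_lay //.
move: (col a) (col b) h1 h2 {hab} => ca cb.
by case: ca => [|[|[|ca]]]; case: cb => [|[|[|cb]]].
Qed.

Lemma filter_nil_restrict (T : eqType) (p q : T) (P : pred T) s :
  ~~ P p -> ~~ P q -> [seq v <- restrict p q s | P v] = [::].
Proof.
move=> hp hq; rewrite /restrict -filter_predI.
rewrite (eq_filter (a2 := pred0)) ?filter_pred0 // => z /=.
by case: (eqVneq z p) => [->|_]; [rewrite (negbTE hp) | case: (eqVneq z q) => [->|_]; rewrite ?(negbTE hq) ?andbF].
Qed.

Definition blkD (V : finType) (col : V -> nat) (p q : V) : seq V :=
  [seq v <- LL col | v != q] ++ [:: p; q] ++ [seq v <- LL col | v != p].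

Definition blkA (V : finType) (col : V -> nat) (p q : V) : seq V :=
  [seq v <- LL col | (v != p) && (v != q) && (col v < col q)].
Definition blkB (V : finType) (col : V -> nat) (p q : V) : seq V :=
  [seq v <- LL col | (v != p) && (v != q) && (col q <= col v)].

Definition blkS (V : finType) (col : V -> nat) (p q : V) : seq V :=
  blkA col p q ++ [:: p; q] ++ blkB col p q ++ blkA col p q ++ [:: q; p] ++ blkB col p q.

Lemma nTE (T : eqType) (x y : T) : x != y -> (y == x) = false.
Proof. by rewrite eq_sym => /negbTE. Qed.

Ltac neqsimp :=
  repeat match goal with
  | H : is_true (?x != ?y) |- context [?x == ?y] => rewrite (negbTE H)
  | H : is_true (?x != ?y) |- context [?y == ?x] => rewrite (nTE H)
  end; rewrite ?eqxx /=.

Lemma blkD_edge (V : finType) (col : V -> nat) p q a b :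
  a != b -> col a < col b -> col b < 3 -> col p = 0 -> col q = 2 ->
  ~~ ((a == p) && (b == q)) ->
  restrict a b (blkD col p q) = [:: a; b; a; b].
Proof.
move=> nab h1 h2 hp hq hn.
rewrite /blkD !restrict_cat !restrict_filter restrict_LL //.
have aq : a != q by apply/eqP => e; move: h1 h2; rewrite e hq; lia.
have bp : b != p by apply/eqP => e; move: h1; rewrite e hp.
have pq : p != q by apply/eqP => e; move: hp; rewrite e hq.
rewrite /restrict /=.
case: (eqVneq a p) hn => [e|ap] /=.
  subst a; rewrite ?eqxx /= => bq; neqsimp; done.
case: (eqVneq b q) => [e|bq] _.
  subst b; neqsimp; done.
neqsimp; done.
Qed.

Lemma blkD_non (V : finType) (col : V -> nat) p q :
  col p = 0 -> col q = 2 ->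
  restrict p q (blkD col p q) = [:: p; p; q; q].
Proof.
move=> hp hq.
have pq : p != q by apply/eqP => e; move: hp; rewrite e hq.
rewrite /blkD !restrict_cat !restrict_filter restrict_LL ?hp ?hq //.
rewrite /restrict /=; neqsimp; rewrite ?orbT; done.
Qed.

Ltac ifsolve := repeat (case: ifP => /= ?); try done; try lia.

Lemma blkS_edge (V : finType) (col : V -> nat) p q a b :
  a != b -> p != q -> col a < col b -> col b < 3 -> col p <= col q <= (col p).+1 ->
  ~~ ((a == p) && (b == q)) -> ~~ ((a == q) && (b == p)) ->
  restrict a b (blkS col p q) = [:: a; b; a; b].
Proof.
move=> nab pq h1 h2 h3 hn1 hn2.
rewrite /blkS /blkA /blkB !restrict_cat !restrict_filter restrict_LL //.
rewrite /restrict /=.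
case: (eqVneq a p) hn1 hn2 => [e|ap].
  subst a => /= hn1 _; rewrite (negbTE hn1); neqsimp; ifsolve.
case: (eqVneq a q) => [e|aq].
  subst a => _ /= hn2; rewrite (negbTE hn2); neqsimp; ifsolve.
case: (eqVneq b p) => [e|bp].
  subst b => _ _; neqsimp; ifsolve.
case: (eqVneq b q) => [e|bq].
  subst b => _ _; neqsimp; ifsolve.
move=> _ _; neqsimp; ifsolve.
Qed.

Lemma blkS_non (V : finType) (col : V -> nat) p q :
  p != q -> restrict p q (blkS col p q) = [:: p; q; q; p].
Proof.
move=> pq.
rewrite /blkS /blkA /blkB !restrict_cat !restrict_filter !filter_nil_restrict
  ?eqxx ?andbF //=.
rewrite /restrict /=; neqsimp; rewrite ?orbT; done.
Qed.

Definition blk (V : finType) (col : V -> nat) (p q : V) : seq V :=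
  if col q == (col p).+2 then blkD col p q else blkS col p q.

Definition prs (V : finType) (E : V -> V -> bool) (col : V -> nat) : seq (V * V) :=
  [seq pq <- enum {: V * V} | (pq.1 != pq.2) && ~~ E pq.1 pq.2 && (col pq.1 <= col pq.2)].

Definition wrd (V : finType) (E : V -> V -> bool) (col : V -> nat) : seq V :=
  LL col ++ LL col ++ flatten [seq blk col pq.1 pq.2 | pq <- prs E col].

Lemma flat_alt (T : Type) (a b : T) n :
  flatten (nseq n [:: a; b]) = [seq (if odd i then b else a) | i <- iota 0 (2 * n)].
Proof.
elim: n => [|n IH]; first by [].
have e : 2 * n.+1 = (2 * n).+2 by rewrite mulnS.
rewrite e /= IH.
have -> : iota 2 (2 * n) = map (addn 2) (iota 0 (2 * n)) by rewrite -iotaDl addn0.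
rewrite -map_comp.
by congr (_ :: _ :: _); apply: eq_map => i /=; rewrite negbK.
Qed.

Lemma alt_nozz (T : eqType) (a b : T) u s1 s2 z :
  a != b -> u = s1 ++ z :: z :: s2 -> ~ alt_word a b u.
Proof.
move=> nab eu.
have hs : (size s1).+1 < size u by rewrite eu size_cat /= addnS ltnS addnS leq_addr.
have h1 : nth a u (size s1) = z by rewrite eu nth_cat ltnn subnn.
have h2 : nth a u (size s1).+1 = z by rewrite eu nth_cat ltnNge leqnSn /= subSn // subnn.
have key : forall f : nat -> T, u = [seq f i | i <- iota 0 (size u)] ->
    (forall i, f i.+1 != f i) -> False.
  move=> f ef hf.
  have e1 : f (size s1) = z.
    by move: h1; rewrite {1}ef (nth_map 0) ?size_iota ?nth_iota ?add0n // ltnW.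
  have e2 : f (size s1).+1 = z.
    by move: h2; rewrite {1}ef (nth_map 0) ?size_iota ?nth_iota ?add0n.
  by move: (hf (size s1)); rewrite e1 e2 eqxx.
case=> ef; apply: (key _ ef) => i /=; case: (odd i) => //=; by [rewrite eq_sym|].
Qed.

Lemma alt_ok (T : eqType) (a b : T) (ss : seq (seq T)) :
  all (fun s => s == [:: a; b; a; b]) ss ->
  alt_word a b ([:: a; b] ++ [:: a; b] ++ flatten ss).
Proof.
move=> hall.
have hf : flatten ss = flatten (nseq (2 * size ss) [:: a; b]).
  elim: ss hall => [|s ss IH]; first by [].
  move=> /andP [/eqP -> /IH IH'].
  have e : 2 * size (s :: ss) = (2 * size ss).+2 by rewrite /=; lia.
  by rewrite e /= IH'.
have -> : [:: a; b] ++ [:: a; b] ++ flatten ss = flatten (nseq (2 * (size ss).+1) [:: a; b]).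
  have e2 : 2 * (size ss).+1 = (2 * size ss).+2 by lia.
  by rewrite hf e2 /=.
left; rewrite flat_alt size_map size_iota //.
Qed.

Lemma restrict_flatten (T : eqType) (a b : T) ss :
  restrict a b (flatten ss) = flatten [seq restrict a b s | s <- ss].
Proof. by rewrite /restrict filter_flatten. Qed.

Lemma alt_word_sym (T : eqType) (a b : T) u : alt_word a b u -> alt_word b a u.
Proof. by case => h; [right|left]. Qed.

Lemma zzL (T : Type) (l X : seq T) :
  (exists s1 s2 (z : T), X = s1 ++ z :: z :: s2) ->
  exists s1 s2 (z : T), l ++ X = s1 ++ z :: z :: s2.
Proof. by case=> s1 [s2 [z ->]]; exists (l ++ s1), s2, z; rewrite catA. Qed.

Lemma zzR (T : Type) (r X : seq T) :
  (exists s1 s2 (z : T), X = s1 ++ z :: z :: s2) ->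
  exists s1 s2 (z : T), X ++ r = s1 ++ z :: z :: s2.
Proof. by case=> s1 [s2 [z ->]]; exists s1, (s2 ++ r), z; rewrite -catA. Qed.

Lemma zz_in (V : finType) (E : V -> V -> bool) (col : V -> nat) p q :
  (forall v, col v < 3) -> (p, q) \in prs E col ->
  exists s1 s2 z, restrict p q (wrd E col) = s1 ++ z :: z :: s2.
Proof.
move=> hc hin.
have := hin; rewrite mem_filter /= => /andP [/andP [/andP [pq _] hle] _].
have [s1 [z [s2 hb]]] : exists s1 z s2, restrict p q (blk col p q) = s1 ++ z :: z :: s2.
  rewrite /blk; case: ifP => h.
    have hp : col p = 0 by move: (hc q) h; lia.
    have hq : col q = 2 by move: (hc q) h; lia.
    by rewrite blkD_non //; exists [::], p, [:: q; q].
  by rewrite blkS_non //; exists [:: p], q, [:: p].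
rewrite /wrd; case/splitPr: hin => r1 r2.
rewrite !restrict_cat restrict_flatten !map_cat flatten_cat /= hb.
by apply: zzL; apply: zzL; apply: zzL; apply: zzR; exists s1, s2, z.
Qed.

Lemma col_wr (V : finType) (E : V -> V -> bool) (col : V -> nat) :
  (forall a b, E a b = E b a) ->
  (forall a b, a != b -> E a b -> col a != col b) ->
  (forall v, col v < 3) -> word_representable E.
Proof.
move=> Esym hprop hc.
have key : forall a b, a != b -> E a b -> col a < col b -> alternate a b (wrd E col).
  move=> a b nab eab lab.
  rewrite /alternate /wrd restrict_cat restrict_LL // restrict_cat restrict_LL // restrict_flatten -map_comp.
  apply: alt_ok; rewrite all_map; apply/allP => [[p q]].
  rewrite mem_filter /= => /andP [/andP [/andP [pq hnE] hle] _].
  apply/eqP; rewrite /blk; case: ifP => h.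
    apply: blkD_edge => //; try (move: (hc q) h; lia).
    by apply/negP => /andP [/eqP ea /eqP eb]; subst; rewrite eab in hnE.
  apply: blkS_edge => //; first by move: (hc q) (hc p) h hle; lia.
    by apply/negP => /andP [/eqP ea /eqP eb]; subst; rewrite eab in hnE.
  by apply/negP => /andP [/eqP ea /eqP eb]; subst; rewrite Esym eab in hnE.
exists (wrd E col); split.
  move=> v; rewrite /wrd mem_cat; apply/orP; left.
  have hv : v \in lay col (col v) by rewrite /lay mem_filter eqxx mem_enum.
  rewrite /LL !mem_cat; move: hv (hc v); case: (col v) => [|[|[|]]] //= -> //.
  by rewrite orbT. by rewrite !orbT.
move=> a b nab; split.
  move=> eab; case: (ltngtP (col a) (col b)) => h.
  - exact: key.
  - rewrite /alternate restrict_sym; apply: alt_word_sym; apply: key => //.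
    by rewrite eq_sym. by rewrite Esym.
  - by move: (hprop a b nab eab); rewrite h eqxx.
case eab: (E a b) => //; move=> halt; exfalso.
case: (leqP (col a) (col b)) => h.
  have : (a, b) \in prs E col by rewrite mem_filter /= nab eab h mem_enum.
  case/(zz_in hc) => s1 [s2 [z hz]].
  by apply: (alt_nozz nab hz).
have : (b, a) \in prs E col by rewrite mem_filter /= eq_sym nab Esym eab mem_enum ltnW.
case/(zz_in hc) => s1 [s2 [z hz]].
move: halt; rewrite /alternate restrict_sym hz.
by move/alt_word_sym; apply: (alt_nozz _ (erefl _)); rewrite eq_sym.
Qed.


Lemma core (n x K i j d e : nat) :
  n %% 3 = 1 -> K %% 6 = 1 -> K < 2 * n -> (K * x) %/ (2 * n) %% 3 = 2 ->
  x %% 3 = 2 -> e <= 1 -> j + 2 * n * e = i + d ->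
  (d == 1) || (d == x) || (d == n) ->
  (i + (K * i) %/ (2 * n)) %% 3 != (j + (K * j) %/ (2 * n)) %% 3.
Proof.
move=> hn hK hKm hKx hx he hij hd.
have m0 : 0 < 2 * n by lia.
have hF : (d + (K * d) %/ (2 * n)) %% 3 = 1.
  case/orP: hd => [/orP [] | ] /eqP ->.
  - by rewrite muln1 divn_small //.
  - by lia.
  - rewrite [K * n]mulnC [2 * n]mulnC divnMl; last by lia.
    by lia.
have hKj : K * j + K * e * (2 * n) = K * i + K * d.
  by rewrite -mulnA [e * _]mulnC -mulnDr hij mulnDr.
have A : (K * j + K * e * (2 * n)) %/ (2 * n) = (K * j) %/ (2 * n) + K * e.
  by rewrite divnDMl.
have B := divnD (K * i) (K * d) m0.
rewrite hKj in A; rewrite A in B.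
move: B hF; move: (_ <= _ %% _ + _ %% _) => beta.
move: ((K * i) %/ (2 * n)) ((K * j) %/ (2 * n)) ((K * d) %/ (2 * n)) => Ai Aj Fd.
case: e he hij {hKj A} => [|[|//]] _; rewrite ?muln0 ?muln1 => hij;
  case: beta => /= hB hF; lia.
Qed.

Lemma cdist_cases (m a b : nat) :
  a < m -> b < m ->
  exists i j e, [/\ e <= 1, j + m * e = i + cdist m a b &
                   (i = a /\ j = b) \/ (i = b /\ j = a)].
Proof.
move=> ha hb; rewrite /cdist /minn.
case: (leqP a b) => h1; case: ltnP => h2;
  first [ by exists a, b, 0; split; [by []| lia | left]
        | by exists b, a, 1; split; [by []| lia | right]
        | by exists b, a, 0; split; [by []| lia | right]
        | by exists a, b, 1; split; [by []| lia | left] ].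
Qed.

Lemma cdist_sym (m a b : nat) : cdist m a b = cdist m b a.
Proof.
rewrite /cdist; case: (leqP a b) => h1; case: (leqP b a) => h2 //; try lia.
Qed.


Lemma exK (n x : nat) :
  1 < x < n -> n %% 3 = 1 -> x %% 3 = 2 -> 2 < x -> 2 * x < n ->
  exists K, [/\ K %% 6 = 1, K < 2 * n & (K * x) %/ (2 * n) %% 3 = 2].
Proof.
move=> /andP [h1 h2] hn hx h3 h4.
have m0 : 0 < 2 * n by lia.
case: (ltnP (3 * x) n) => hA.
  pose j := (4 * n - x) %/ (6 * x).
  have e1 := divn_eq (4 * n - x) (6 * x).
  have e2 : (4 * n - x) %% (6 * x) < 6 * x by rewrite ltn_mod; lia.
  rewrite -/j in e1.
  have e3 : 5 * j <= j * x by rewrite mulnC leq_mul2l; lia.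
  have eK : (6 * j + 7) * x = 6 * (j * x) + 7 * x by rewrite mulnDl mulnA.
  move: e1; rewrite mulnCA => e1.
  exists (6 * j + 7); rewrite eK.
  move: (j * x) ((4 * n - x) %% (6 * x)) e1 e2 e3 => P r e1 e2 e3.
  split; first by lia.
    by lia.
  have -> : 6 * P + 7 * x = (6 * P + 7 * x - 4 * n) + 2 * (2 * n) by lia.
  by rewrite divnDMl // divn_small //; lia.
pose D := n - 2 * x.
have hD : 3 <= D by lia.
pose q := x %/ (6 * D).
have e1 := divn_eq x (6 * D).
have e2 : x %% (6 * D) < 6 * D by rewrite ltn_mod; lia.
rewrite -/q mulnCA in e1.
have e3 : 3 * q <= q * D by rewrite mulnC leq_mul2l hD orbT.
have eK : (12 * q + 13) * x = 12 * (q * x) + 13 * x by rewrite mulnDl mulnA.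
have en : (3 * q + 2) * (2 * n) = 12 * (q * x) + 6 * (q * D) + 4 * n.
  have -> : n = 2 * x + D by lia.
  rewrite !mulnDl !mulnDr !mulnA; lia.
exists (12 * q + 13); rewrite eK.
move: (q * x) (q * D) (x %% (6 * D)) e1 e2 e3 en => qx qD r e1 e2 e3 en.
split; first by lia.
  by lia.
have -> : 12 * qx + 13 * x = (4 * x + r - 4 * D) + (3 * q + 2) * (2 * n) by lia.
by rewrite divnDMl // divn_small //; lia.
Qed.

Theorem theorem25 (n x : nat) :
  1 < x < n ->
  n %% 3 = 1 -> x %% 3 = 2 -> 2 < x -> 2 * x < n ->
  word_representable (C2n n x).
Proof.
move=> h1 hn hx h3 h4.
have [K [hK hKm hKx]] := exK h1 hn hx h3 h4.
apply: (@col_wr _ _ (fun i : 'I_(2 * n) => (i + (K * i) %/ (2 * n)) %% 3)).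
- by move=> a b; rewrite /C2n /circulant cdist_sym eq_sym.
- move=> a b nab /andP [_ hd].
  have [i [j [e [he hij hor]]]] := cdist_cases (ltn_ord a) (ltn_ord b).
  have := core hn hK hKm hKx hx he hij hd.
  by case: hor => [[-> ->] | [-> ->]] //; rewrite eq_sym.
- by move=> v; rewrite ltn_mod.
Qed.
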